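(* Let $\Omega\subset\mathbb{R}^n$ be Lebesgue measurable with finite measure, let $f$ satisfy Assumption A, let $L>L_f$, and let $g=\delta_{\mathbb{Z}}$. Let $u_0\in L^2(\Omega)$ and let $(u_k)$ be a sequence such that for every $k\ge0$, $u_{k+1}$ is a global minimizer over $u\in L^2(\Omega)$ of \[ f(u_k)+\int_\Omega\nabla f(u_k)(u-u_k)\,dx+\frac L2\|u-u_k\|_{L^2(\Omega)}^2+\int_\Omega\delta_{\mathbb{Z}}(u(x))\,dx . \] If $u^*\in L^2(\Omega)$ is a weak sequential limit point of $(u_k)$, then the whole sequence satisfies $u_k\to u^*$ in $L^1(\Omega)$.
   Context: Assumption A: $f:L^2(\Omega)\to\mathbb{R}$ is bounded from below, weakly lower semicontinuous, Fréchet differentiable, and $\nabla f:L^2(\Omega)\to L^2(\Omega)$ is Lipschitz continuous with constant $L_f$. $\delta_{\mathbb{Z}}(u)=0$ if $u\in\mathbb{Z}$ and $\delta_{\mathbb{Z}}(u)=+\infty$ otherwise. *)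

(* Defs.v *)
From HB Require Import structures.
From mathcomp Require Import all_boot all_order all_algebra.
From mathcomp Require Import all_classical all_reals all_analysis.
Set Implicit Arguments. Unset Strict Implicit. Unset Printing Implicit Defensive.
Import Order.TTheory GRing.Theory Num.Theory.
Import numFieldNormedType.Exports.
Local Open Scope classical_set_scope.
Local Open Scope ring_scope.

Section L2defs.
Context d (T : measurableType d) (R : realType).
Variable mu : {measure set T -> \bar R}.

Definition inL2 (u : T -> R) : Prop := u \in Lfun mu 2%:E.

Definition L2norm (u : T -> R) : R := fine ('N[mu]_2%:E [EFin \o u])%E.

Definition L2inner (u v : T -> R) : R := \int[mu]_x (u x * v x).

(* weak convergence in L^2 (dual of L^2 identified with L^2 by Riesz) *)
Definition weak_cvg_L2 (v : nat -> T -> R) (u : T -> R) : Prop :=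
  forall w, inL2 w -> L2inner (v n) w @[n --> \oo] --> L2inner u w.

Definition bounded_below_L2 (f : (T -> R) -> R) : Prop :=
  exists m : R, forall u, inL2 u -> m <= f u.

(* f is lower semicontinuous for the weak topology of L^2: at every u,
   for every eps > 0 there is a basic weak neighbourhood
   { v | |<v - u, w_i>| < delta, i < m } on which f > f u - eps *)
Definition weakly_lsc_L2 (f : (T -> R) -> R) : Prop :=
  forall u, inL2 u -> forall eps : R, 0 < eps ->
    exists (m : nat) (w : nat -> T -> R) (delta : R),
      [/\ 0 < delta, (forall i, (i < m)%N -> inL2 (w i)) &
        forall v, inL2 v ->
          (forall i, (i < m)%N -> `|L2inner (v \- u) (w i)| < delta) ->
          f u - eps < f v].

(* f is Frechet differentiable on L^2 with gradient (Riesz representative)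
   gradf : L^2 -> L^2, i.e. Df(u) h = int_Omega gradf(u) h dx *)
Definition frechet_gradient_L2 (f : (T -> R) -> R) (gradf : (T -> R) -> T -> R)
  : Prop :=
  forall u, inL2 u ->
    inL2 (gradf u) /\
    forall eps : R, 0 < eps -> exists delta : R, 0 < delta /\
      forall h, inL2 h -> L2norm h < delta ->
        `|f (u \+ h) - f u - L2inner (gradf u) h| <= eps * L2norm h.

Definition lipschitz_L2 (G : (T -> R) -> T -> R) (Lf : R) : Prop :=
  forall u v, inL2 u -> inL2 v -> L2norm (G u \- G v) <= Lf * L2norm (u \- v).

Definition assumptionA (f : (T -> R) -> R) (gradf : (T -> R) -> T -> R) (Lf : R)
  : Prop :=
  [/\ bounded_below_L2 f, weakly_lsc_L2 f, frechet_gradient_L2 f gradf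
    & lipschitz_L2 gradf Lf].

End L2defs.

Definition deltaZ (R : realType) (x : R) : \bar R :=
  if x \is a Num.int then 0%E else +oo%E.

Section objective.
Context d (T : measurableType d) (R : realType).
Variable mu : {measure set T -> \bar R}.

Definition prox_model (f : (T -> R) -> R) (gradf : (T -> R) -> T -> R) (L : R)
  (uk u : T -> R) : \bar R :=
  ((f uk + L2inner mu (gradf uk) (u \- uk) + L / 2 * L2norm mu (u \- uk) ^+ 2)%:E
   + \int[mu]_x deltaZ (u x))%E.

End objective.

(* Main.v *)
Require Import Defs.
From HB Require Import structures.
From mathcomp Require Import all_boot all_order all_algebra.
From mathcomp Require Import all_classical all_reals all_analysis.
From mathcomp Require Import measurable_realfun.
Import Order.TTheory GRing.Theory Num.Theory.
Import numFieldNormedType.Exports.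
Local Open Scope classical_set_scope.
Local Open Scope ring_scope.
Section B.
Context {d} {T : measurableType d} {R : realType} {mu : {measure set T -> \bar R}}.
Lemma inL2_meas u : inL2 mu u -> measurable_fun setT u.
Proof. by rewrite /inL2 inE => /andP[]; rewrite inE. Qed.
Lemma inL2_fin u : inL2 mu u -> ('N[mu]_2%:E[EFin \o u] < +oo)%E.
Proof. by rewrite /inL2 inE => /andP[_]; rewrite inE. Qed.
Lemma inL2D u v : inL2 mu u -> inL2 mu v -> inL2 mu (u \+ v).
Proof. move=> hu hv. exact: (Lfun_addr_closed mu (lee1n 2)).2. Qed.
Lemma inL2N u : inL2 mu u -> inL2 mu (\- u).
Proof. move=> hu. exact: Lfun_oppr_closed. Qed.
Lemma inL2B u v : inL2 mu u -> inL2 mu v -> inL2 mu (u \- v).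
Proof. by move=> hu hv; apply: inL2D => //; exact: inL2N. Qed.
Lemma inL2Z a u : inL2 mu u -> inL2 mu (fun x => a * u x).
Proof.
move=> hu; have h2 : (1:R) <= 2 by rewrite ler1n.
have := Lfun_scale a h2 hu.
by have -> : a \o* u = (fun x => a * u x) by apply/funext => x /=; rewrite mulrC.
Qed.
Lemma inL2_0 : inL2 mu (cst 0).
Proof. exact: (Lfun_addr_closed mu (lee1n 2)).1. Qed.

Lemma measurable_Zset : measurable [set x : R | x \is a Num.int].
Proof.
have -> : [set x : R | x \is a Num.int] = \bigcup_(z : int) [set (z%:~R : R)].
  apply/seteqP; split => x /=.
    by move=> /intrP[z ->]; exists z.
  by move=> [z _ ->]; rewrite intr_int.
apply: countable_bigcupT_measurable; first exact: countableP.
by move=> z; exact: measurable_set1.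
Qed.

Lemma measurable_deltaZ (u : T -> R) : measurable_fun setT u ->
  measurable_fun [set: T] ((fun x => deltaZ (u x)) : T -> \bar R).
Proof.
move=> mu_; rewrite /deltaZ.
apply: measurable_fun_ifT => //.
apply: (measurable_fun_bool true).
rewrite setTI.
have -> : (fun x => u x \is a Num.int) @^-1` [set true] = u @^-1` [set x : R | x \is a Num.int] by [].
by rewrite -[X in measurable X]setTI; apply: mu_ => //; exact: measurable_Zset.
Qed.
End B.

Section N.
Context {d} {T : measurableType d} {R : realType} {mu : {measure set T -> \bar R}}.

Lemma RintegralE (f : T -> R) : mu.-integrable setT (EFin \o f) ->
  (\int[mu]_x f x)%:E = (\int[mu]_x (f x)%:E)%E.
Proof. by move=> hf; rewrite fineK // integral_fune_fin_num. Qed.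

Lemma L2norm_ge0 u : (0 <= L2norm mu u)%R.
Proof. by rewrite /L2norm fine_ge0 // Lnorm_ge0. Qed.

Lemma L2normE u : inL2 mu u -> (L2norm mu u)%:E = 'N[mu]_2%:E[EFin \o u]%E.
Proof.
move=> hu; rewrite /L2norm fineK // ge0_fin_numE ?Lnorm_ge0 //.
exact: inL2_fin.
Qed.

Lemma L2norm_sqrE u : inL2 mu u ->
  (L2norm mu u ^+ 2)%:E = (\int[mu]_x (u x ^+ 2)%:E)%E.
Proof.
move=> hu.
have h2 : (2%R : R) != 0%R by [].
have := powR_Lnorm mu (EFin \o u) h2.
rewrite -L2normE // poweR_EFin powR_mulrn ?L2norm_ge0 // => ->.
apply: eq_integral => x _ /=.
by rewrite powR_mulrn // real_normK // num_real.
Qed.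

Lemma L2inner_int u v : inL2 mu u -> inL2 mu v ->
  mu.-integrable setT (EFin \o (fun x => u x * v x)%R).
Proof. by move=> hu hv; apply/Lfun1_integrable; exact: Lfun2_mul_Lfun1. Qed.

Lemma L2inner_sym u v : L2inner mu u v = L2inner mu v u.
Proof. by rewrite /L2inner; under eq_Rintegral do rewrite mulrC. Qed.

Lemma L2innerDr u v w : inL2 mu u -> inL2 mu v -> inL2 mu w ->
  L2inner mu u (v \+ w) = (L2inner mu u v + L2inner mu u w)%R.
Proof.
move=> hu hv hw; rewrite /L2inner.
under eq_Rintegral do rewrite /= mulrDr.
by rewrite RintegralD //; apply: L2inner_int.
Qed.

Lemma L2innerBl a b h : inL2 mu a -> inL2 mu b -> inL2 mu h ->
  L2inner mu (a \- b) h = (L2inner mu a h - L2inner mu b h)%R.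
Proof.
move=> ha hb hh; rewrite /L2inner.
under eq_Rintegral do rewrite /= mulrBl.
by rewrite RintegralB //; apply: L2inner_int.
Qed.

Lemma L2innerZr u s h : inL2 mu u -> inL2 mu h ->
  L2inner mu u (fun x => s * h x)%R = (s * L2inner mu u h)%R.
Proof.
move=> hu hh; rewrite /L2inner.
under eq_Rintegral do rewrite mulrCA.
by rewrite RintegralZl //; apply: L2inner_int.
Qed.

Lemma L2inner_CS a b : inL2 mu a -> inL2 mu b ->
  (`|L2inner mu a b| <= L2norm mu a * L2norm mu b)%R.
Proof.
move=> ha hb; rewrite -lee_fin.
apply: (le_trans (_ : (_ <= (\int[mu]_x `|a x * b x|)%:E)%E)).
  by rewrite lee_fin; apply: le_normr_Rintegral => //; exact: L2inner_int.
rewrite RintegralE; last first.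
  by apply: integrable_norm => //; exact: L2inner_int.
have := @hoelder _ _ _ mu a b 2 2 (inL2_meas _ ha) (inL2_meas _ hb) (ltr0n _ 2) (ltr0n _ 2).
have h22 : (2^-1 + 2^-1 : R) = 1%R by rewrite [RHS]splitr !div1r.
move=> /(_ h22).
rewrite Lnorm1 EFinM !L2normE //.
Qed.

Lemma L2normZ s h : inL2 mu h ->
  L2norm mu (fun x => s * h x) = `|s| * L2norm mu h.
Proof.
move=> hh; apply/eqP.
rewrite -(@eqrXn2 _ 2%N) ?L2norm_ge0 ?mulr_ge0 ?L2norm_ge0 //.
apply/eqP/EFin_inj.
rewrite (L2norm_sqrE _ (inL2Z s h hh)) exprMn real_normK ?num_real //.
rewrite EFinM L2norm_sqrE //.
under eq_integral do rewrite exprMn EFinM.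
rewrite integralZl //.
exact: Lfun2_integrable_sqr.
Qed.
End N.
From mathcomp Require Import ring lra.
Section Der.
Context {R : realType}.
Lemma is_derive_eps (g : R -> R) t D :
  (forall e, 0 < e -> exists del, 0 < del /\ forall s, s != 0 -> `|s| < del ->
     `|(g (s + t) - g t) / s - D| <= e) ->
  is_derive t 1 g D.
Proof.
move=> H.
have cv : (fun s : R => s^-1 *: ((g \o shift t) (s *: 1) - g t)) @ 0^' --> D.
  apply/cvgrPdist_le => e e0.
  have [del [del0 Hd]] := H e e0.
  rewrite near_withinE; apply/nbhs_ballP; exists del => // s.
  rewrite /ball /= sub0r normrN => hs sneq0.
  rewrite distrC /= -[s%:A]/(s * 1) mulr1 -[s^-1 *: _]/(s^-1 * _) mulrC; exact: Hd.
have dv : derivable g t 1 by apply/cvg_ex; exists D.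
constructor => //.
exact: cvg_lim cv.
Qed.
End Der.

Section Descent.
Context {d} {T : measurableType d} {R : realType} {mu : {measure set T -> \bar R}}.
Variables (f : (T -> R) -> R) (gradf : (T -> R) -> T -> R) (Lf : R).
Hypothesis hF : frechet_gradient_L2 mu f gradf.
Hypothesis hL : lipschitz_L2 mu gradf Lf.

Lemma descent u h : inL2 mu u -> inL2 mu h ->
  f (u \+ h) <= f u + L2inner mu (gradf u) h + Lf / 2 * L2norm mu h ^+ 2.
Proof.
move=> hu hh.
pose w t := fun x => u x + t * h x.
have hw t : inL2 mu (w t) by apply: inL2D => //; exact: inL2Z.
pose N := L2norm mu h.
pose c := L2inner mu (gradf u) h.
pose g t := f (w t) - t * c - Lf / 2 * t ^+ 2 * N ^+ 2.
pose D t := L2inner mu (gradf (w t)) h - c - Lf * t * N ^+ 2.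
have N0 : 0 <= N by exact: L2norm_ge0.
have wS t s : w (s + t) = w t \+ (fun x => s * h x).
  by apply/funext => x; rewrite /w /=; ring.
have der (t : R) : is_derive t (1:R) g (D t).
  apply: is_derive_eps => e e0.
  have [hgw Hf] := hF _ (hw t).
  pose e' := e / (2 * (N + 1)).
  have N1 : 0 < N + 1 by lra.
  have e'0 : 0 < e' by apply: divr_gt0 => //; lra.
  have [del [del0 Hdel]] := Hf e' e'0.
  have K0 : 0 < `|Lf| * N ^+ 2 + 1 by have := normr_ge0 Lf; nra.
  exists (Num.min (del / (N + 1)) (e / (`|Lf| * N ^+ 2 + 1))); split.
    by rewrite lt_min; apply/andP; split; apply: divr_gt0.
  move=> s s0; rewrite lt_min => /andP[hs1 hs2].
  have hsh : inL2 mu (fun x => s * h x) by exact: inL2Z.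
  have nsh : L2norm mu (fun x => s * h x) = `|s| * N by exact: L2normZ.
  have a0 : 0 < `|s| by rewrite normr_gt0.
  rewrite ltr_pdivlMr // in hs1.
  rewrite ltr_pdivlMr // in hs2.
  have Hr := Hdel _ hsh.
  rewrite nsh L2innerZr // in Hr.
  have hsN : `|s| * N < del by apply: le_lt_trans hs1; rewrite ler_pM2l // lerDl.
  have {}Hr := Hr hsN.
  rewrite /g wS.
  set F1 := f _ in Hr *; set F0 := f (w t) in Hr *.
  set q := L2inner mu (gradf (w t)) h in Hr *.
  have -> : (F1 - (s + t) * c - Lf / 2 * (s + t) ^+ 2 * N ^+ 2 -
      (F0 - t * c - Lf / 2 * t ^+ 2 * N ^+ 2)) / s - D t
      = (F1 - F0 - s * q) / s - Lf / 2 * s * N ^+ 2.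
    by rewrite /D -/q; field.
  apply: (le_trans (ler_normB _ _)).
  rewrite normrM normfV normrM normrM (ger0_norm (sqr_ge0 N)).
  rewrite [`|Lf / 2|]normrM [`|2^-1|]ger0_norm ?invr_ge0 //.
  have h1 : `|F1 - F0 - s * q| / `|s| <= e' * N.
    by rewrite ler_pdivrMr // -mulrA [N * _]mulrC.
  have h2 : e' * N <= e / 2.
    rewrite /e' mulrAC ler_pdivrMr; last lra.
    rewrite mulrA [e / 2 * 2]mulrAC -mulrA divff // mulr1; nra.
  have h3 : `|Lf| * 2^-1 * `|s| * N ^+ 2 <= e / 2.
    have : `|Lf| * N ^+ 2 * `|s| <= e by have := normr_ge0 Lf; have := sqr_ge0 N; nra.
    move=> hh3; rewrite (_ : _ * _ = (`|Lf| * N ^+ 2 * `|s|) / 2); last by ring.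
    by rewrite ler_pM2r ?invr_gt0.
  rewrite [leRHS]splitr; apply: lerD; [exact: le_trans h1 h2 | exact: h3].
have Dle t : 0 < t -> D t <= 0.
  move=> t0.
  have [hg _] := hF _ (hw t).
  have [hgu _] := hF _ hu.
  rewrite /D /c -L2innerBl //.
  have e1 : w t \- u = (fun x => t * h x) by apply/funext => x; rewrite /w /=; ring.
  have := hL _ _ (hw t) hu; rewrite e1 L2normZ // (ger0_norm (ltW t0)) -/N => hl.
  have := L2inner_CS _ _ (inL2B _ _ hg hgu) hh; rewrite -/N => cs.
  set I := L2inner _ _ _ in cs *.
  set M := L2norm _ _ in hl cs.
  have := real_ler_norm (num_real I).
  have := L2norm_ge0 (gradf (w t) \- gradf u); rewrite -/M.
  nra.
have cont : {within `[0, 1], continuous g}.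
  apply: derivable_within_continuous => x _; exact: ex_derive.
have [c' c01 hmvt] := MVT ltr01 (fun x _ => der x) cont.
move: c01; rewrite in_itv /= => /andP[c0 _].
have := Dle _ c0.
have w0 : w 0 = u by apply/funext => x; rewrite /w mul0r addr0.
have w1 : w 1 = u \+ h by apply/funext => x; rewrite /w mul1r.
move: hmvt; rewrite /g w0 w1 subr0 mulr1 => hmvt.
rewrite -/N -/c; lra.
Qed.
End Descent.

Section Int.
Context {d} {T : measurableType d} {R : realType} {mu : {measure set T -> \bar R}}.

Lemma deltaZ_ge0 (x : R) : (0 <= deltaZ x)%E.
Proof. by rewrite /deltaZ; case: ifP. Qed.

Lemma int_ae (u : T -> R) : measurable_fun setT u ->
  (\int[mu]_x deltaZ (u x) < +oo)%E -> \forall x \ae mu, u x \is a Num.int.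
Proof.
move=> mu_ hI.
have hint : mu.-integrable setT (fun x => deltaZ (u x)).
  apply/integrableP; split; first exact: measurable_deltaZ.
  under eq_integral do rewrite gee0_abs ?deltaZ_ge0 //.
  exact: hI.
apply: filterS (integrable_ae measurableT hint) => x /(_ I).
by rewrite /deltaZ; case: ifP.
Qed.

Lemma int_integral0 (u : T -> R) : measurable_fun setT u ->
  (\forall x \ae mu, u x \is a Num.int) -> (\int[mu]_x deltaZ (u x) = 0)%E.
Proof.
move=> mu_ hae.
rewrite (ae_eq_integral (cst 0%E)) //; first by rewrite integral0.
- exact: measurable_deltaZ.
- apply: filterS hae => x hx _.
  by rewrite /deltaZ hx.
Qed.

Lemma int_norm_le_sqr (z : R) : z \is a Num.int -> `|z| <= z ^+ 2.
Proof.
move=> hz; have [->|z0] := eqVneq z 0; first by rewrite normr0 expr0n.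
have h1 := norm_intr_ge1 hz z0.
rewrite -real_normK ?num_real // expr2.
by rewrite ler_peMr // (le_trans ler01 h1).
Qed.
End Int.

Section L1.
Context {d} {T : measurableType d} {R : realType} {mu : {measure set T -> \bar R}}.

Lemma L1_le_L2sqr (a : T -> R) : inL2 mu a ->
  (\forall x \ae mu, a x \is a Num.int) ->
  ('N[mu]_1[EFin \o a] <= (L2norm mu a ^+ 2)%:E)%E.
Proof.
move=> ha hae; rewrite L2norm_sqrE // Lnorm1.
have ma := inL2_meas _ ha.
apply: ae_ge0_le_integral => //.
- by apply: measurableT_comp => //; exact: measurableT_comp.
- by move=> x _; rewrite lee_fin sqr_ge0.
- by apply/measurable_EFinP; exact: measurable_funX.
- by apply: filterS hae => x hx _ /=; rewrite lee_fin int_norm_le_sqr.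
Qed.

Definition sgnf (g : T -> R) x : R := if 0 <= g x then 1 else -1.

Lemma sgnf_mul g x : g x * sgnf g x = `|g x|.
Proof.
rewrite /sgnf; case: ifP => h; first by rewrite mulr1 ger0_norm.
by rewrite mulrN1 ltr0_norm // ltNge h.
Qed.

Lemma sgnf_norm g x : `|sgnf g x| = 1.
Proof. by rewrite /sgnf; case: ifP; rewrite ?normrN normr1. Qed.

Lemma measurable_sgnf g : measurable_fun setT g -> measurable_fun setT (sgnf g).
Proof.
move=> mg; rewrite /sgnf.
apply: measurable_fun_ifT => //.
apply: (measurable_fun_bool true).
rewrite setTI.
have -> : (fun x => 0 <= g x) @^-1` [set true] = g @^-1` `[0, +oo[%classic.
  by apply/seteqP; split => x /=; rewrite in_itv /= andbT.
by rewrite -[X in measurable X]setTI; apply: mg => //; exact: measurable_itv.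
Qed.

Lemma inL2_sgnf g : (mu [set: T] < +oo)%E -> measurable_fun setT g ->
  inL2 mu (sgnf g).
Proof.
move=> hmu mg; rewrite /inL2 inE; apply/andP; split.
  by rewrite inE; exact: measurable_sgnf.
rewrite inE /= /finite_norm.
have h2 : (2%R : R) != 0%R by [].
have := powR_Lnorm mu (EFin \o sgnf g) h2.
under eq_integral do rewrite /= sgnf_norm powR1.
rewrite integral_cst // mul1e => hN.
rewrite ltey; apply/negP => /eqP hoo.
by move: hN; rewrite hoo poweRyr // => hN; move: hmu; rewrite -hN ltxx.
Qed.

Lemma inner_le_L1 a b : inL2 mu a -> inL2 mu b -> (forall x, `|b x| <= 1) ->
  ((L2inner mu a b)%:E <= 'N[mu]_1[EFin \o a])%E.
Proof.
move=> ha hb b1.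
apply: (@le_trans _ _ (`|L2inner mu a b|)%:E); first by rewrite lee_fin real_ler_norm ?num_real.
apply: (@le_trans _ _ (\int[mu]_x `|a x * b x|)%:E).
  by rewrite lee_fin; apply: le_normr_Rintegral => //; exact: L2inner_int.
rewrite RintegralE; last by apply: integrable_norm => //; exact: L2inner_int.
rewrite Lnorm1; apply: ge0_le_integral => //.
- apply/measurable_EFinP; apply: measurableT_comp => //.
  by apply: measurable_funM; [exact: (inL2_meas _ ha) | exact: (inL2_meas _ hb)].
- apply: measurableT_comp => //; apply/measurable_EFinP; exact: (inL2_meas _ ha).
- move=> x _ /=; rewrite lee_fin normrM.
  by rewrite ler_piMr.
Qed.
End L1.

Theorem theorem5p4 (d : measure_display) (T : measurableType d) (R : realType)
  (mu : {measure set T -> \bar R})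
  (f : (T -> R) -> R) (gradf : (T -> R) -> T -> R) (Lf L : R)
  (u : nat -> T -> R) (ustar : T -> R) :
  (mu [set: T] < +oo)%E ->
  assumptionA mu f gradf Lf ->
  Lf < L ->
  inL2 mu (u 0%N) ->
  (forall k : nat, inL2 mu (u k.+1) /\
     forall v, inL2 mu v ->
       (prox_model mu f gradf L (u k) (u k.+1) <= prox_model mu f gradf L (u k) v)%E) ->
  inL2 mu ustar ->
  (exists phi : nat -> nat, (forall j, (phi j < phi j.+1)%N) /\
     weak_cvg_L2 mu (fun j => u (phi j)) ustar) ->
  ('N[mu]_1 [EFin \o (fun x => (u k x - ustar x)%R)])%E @[k --> \oo] --> 0%E.
Proof.
move=> hmu [hbb hwlsc hF hL] hLL hu0 hstep hus [phi [phiinc hweak]].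
have hu k : inL2 mu (u k) by case: k => [//|k]; exact: (hstep k).1.
have mu_ k := inL2_meas _ (hu k).
have L2in0 g : L2inner mu g (cst 0) = 0.
  rewrite /L2inner; under eq_Rintegral do rewrite mulr0.
  by rewrite /Rintegral integral0.
have L2n0 : L2norm mu (cst 0) = 0.
  rewrite /L2norm (_ : EFin \o cst 0 = cst 0%E) //.
  by rewrite Lnorm0.
have dZ0 : deltaZ (0 : R) = 0%E by rewrite /deltaZ rpred0.
have hZ k : \forall x \ae mu, u k.+1 x \is a Num.int.
  apply: int_ae => //.
  have := (hstep k).2 _ (@inL2_0 _ _ _ mu).
  rewrite /prox_model.
  under [X in (_ <= _ + X)%E]eq_integral do rewrite /= dZ0.
  rewrite integral0 adde0.
  set I := (\int[mu]_x deltaZ (u k.+1 x))%E => h.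
  rewrite ltey; apply/negP => /eqP hI; move: h; rewrite hI addey //.
have hI0 k : (\int[mu]_x deltaZ (u k.+1 x) = 0)%E := int_integral0 _ (mu_ _) (hZ k).
have key k : f (u k.+2) <= f (u k.+1) - (L - Lf) / 2 * L2norm mu (u k.+2 \- u k.+1) ^+ 2.
  have hd : inL2 mu (u k.+2 \- u k.+1) by exact: inL2B.
  have := (hstep k.+1).2 _ (hu k.+1).
  rewrite /prox_model !hI0.
  have e0 : u k.+1 \- u k.+1 = cst 0 by apply/funext => x /=; rewrite subrr.
  rewrite e0 L2in0 L2n0 !adde0 lee_fin => h.
  have e2 : u k.+2 = u k.+1 \+ (u k.+2 \- u k.+1).
    by apply/funext => x /=; rewrite addrC subrK.
  have := descent _ _ _ hF hL _ _ (hu k.+1) hd; rewrite -e2 => hdesc.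
  move: h hdesc; rewrite expr0n /= mulr0 addr0.
  set N := L2norm _ _; set I := L2inner _ _ _.
  lra.
pose s k := L2norm mu (u k.+2 \- u k.+1) ^+ 2.
pose S n := \sum_(i < n) s i.
have [m hm] := hbb.
have hLL' : 0 < (L - Lf) / 2 by apply: divr_gt0 => //; lra.
have Sbound n : (L - Lf) / 2 * S n <= f (u 1) - f (u n.+1).
  elim: n => [|n IH]; first by rewrite /S big_ord0 mulr0 subrr.
  rewrite /S big_ord_recr /= -/(S n) mulrDr.
  have := key n; rewrite -/(s n); lra.
have s0 n : 0 <= s n by exact: sqr_ge0.
have Snd : {homo S : n m / (n <= m)%N >-> n <= m}.
  apply/nondecreasing_seqP => n; rewrite /S big_ord_recr /= lerDl; exact: s0.
have Sub : has_ubound (range S).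
  exists ((f (u 1) - m) / ((L - Lf) / 2)) => _ [n _ <-].
  rewrite ler_pdivlMr // mulrC; apply: (le_trans (Sbound n)).
  have := hm _ (hu n.+1); lra.
have Scv : cvgn S := nondecreasing_is_cvgn Snd Sub.
set l := limn S.
have Sle n : S n <= l := nondecreasing_cvgn_le Snd Scv n.
have L1d k : ('N[mu]_1[EFin \o (u k.+2 \- u k.+1)%R] <= (s k)%:E)%E.
  apply: L1_le_L2sqr; first exact: inL2B.
  apply: filterS2 (hZ k.+1) (hZ k) => x h1 h2 /=.
  exact: rpredB.
have tele k j : ('N[mu]_1[EFin \o (u (j + k)%N.+1 \- u k.+1)%R] <= (S (j + k)%N - S k)%:E)%E.
  elim: j => [|j IH].
    rewrite add0n subrr (_ : EFin \o (u k.+1 \- u k.+1)%R = cst 0%E).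
      by rewrite Lnorm0.
    by apply/funext => x /=; rewrite subrr.
  have e : u (j.+1 + k)%N.+1 \- u k.+1 = (u (j + k)%N.+2 \- u (j + k)%N.+1) \+ (u (j + k)%N.+1 \- u k.+1).
    by apply/funext => x /=; rewrite addSn; ring.
  rewrite e; apply: le_trans; first apply: eminkowski.
  - by apply: measurable_funB.
  - by apply: measurable_funB.
  - by [].
  have -> : S (j.+1 + k)%N = S (j + k)%N + s (j + k)%N by rewrite /S addSn big_ord_recr.
  rewrite (_ : S (j + k)%N + s (j + k)%N - S k = s (j + k)%N + (S (j + k)%N - S k)); last by ring.
  by rewrite EFinD; apply: leeD.
have phige j : (j <= phi j)%N.
  by elim: j => [//|j IH]; exact: leq_ltn_trans IH (phiinc j).
have finmu : mu [set: T] \is a fin_num by rewrite ge0_fin_numE.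
have bound k : ('N[mu]_1[EFin \o (fun x => u k.+1 x - ustar x)%R] <= (l - S k)%:E)%E.
  pose g := (fun x => u k.+1 x - ustar x).
  have hg : inL2 mu g := inL2B _ _ (hu k.+1) hus.
  have mg := inL2_meas _ hg.
  pose sg := sgnf g.
  have hsg : inL2 mu sg := inL2_sgnf _ hmu mg.
  have sg1 x : `|sg x| <= 1 by rewrite sgnf_norm.
  have hg1 : mu.-integrable setT (EFin \o g) := (Lfun1_integrable mu g).1 (Lfun_subset12 finmu hg).
  have E1 : 'N[mu]_1[EFin \o g]%E = (L2inner mu (u k.+1) sg - L2inner mu ustar sg)%:E.
    rewrite -L2innerBl // /L2inner.
    under eq_Rintegral do rewrite sgnf_mul.
    rewrite RintegralE ?Lnorm1 //; exact: integrable_norm.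
  rewrite -/g E1 lee_fin.
  have cv1 : (fun j => L2inner mu (u k.+1) sg - L2inner mu (u (phi j)) sg) @ \oo -->
      L2inner mu (u k.+1) sg - L2inner mu ustar sg.
    apply: cvgB; first exact: cvg_cst.
    exact: hweak.
  apply: (ler_cvg_to cv1 (cvg_cst (l - S k))).
  apply: filterS (nbhs_infty_ge k.+1) => j hj.
  have hp : (k.+1 <= phi j)%N := leq_trans hj (phige j).
  set n := (phi j).-1.
  have pn : phi j = n.+1 by rewrite /n prednK // (leq_trans _ hp).
  rewrite pn -L2innerBl //.
  rewrite -lee_fin; apply: le_trans (inner_le_L1 _ _ (inL2B _ _ (hu _) (hu _)) hsg sg1) _.
  rewrite (_ : EFin \o (u k.+1 \- u n.+1)%R = \- (EFin \o (u n.+1 \- u k.+1)%R))%E; last first.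
    by apply/funext => x /=; rewrite opprB.
  rewrite oppe_Lnorm.
  have hkn : (k <= n)%N by rewrite -ltnS -pn.
  have := tele k (n - k)%N; rewrite subnK //.
  move=> h; apply: le_trans h _; rewrite lee_fin lerD2r; exact: Sle.
apply: (@squeeze_cvge _ _ _ _ (cst 0%E) _ (fun k => (l - S k.-1)%:E)).
- apply: filterS (nbhs_infty_ge 1) => k; case: k => [//|k] _ /=.
  by apply/andP; split; [exact: Lnorm_ge0 | exact: bound k].
- exact: cvg_cst.
- apply: cvg_EFin; first by apply: nearW.
  rewrite -cvg_shiftS.
  have h := cvgB (cvg_cst l) Scv; rewrite subrr in h; exact: h.
Qed.
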